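(* Within the pseudovariety $\mathsf M$ of all finite monoids, every set $\Sigma$ of $\mathsf M$-pseudoidentities such that $[\![\Sigma]\!]$ consists of groups is h-strong.
   Context: $\mathsf M$ is the pseudovariety of finite monoids (signature: multiplication and $1$); $\Omega_A\mathsf M$ is the free profinite monoid on a finite set $A$. An $\mathsf M$-pseudoidentity is $u=v$ with $u,v\in\Omega_B\mathsf M$, $B$ finite; it holds in a finite monoid $T$ if both sides agree under every continuous homomorphism $\Omega_B\mathsf M\to T$; $[\![\Sigma]\!]$ is the class of finite monoids satisfying $\Sigma$. Provability: for finite $A$, $\Sigma_0\subseteq\Omega_A\mathsf M\times\Omega_A\mathsf M$ is the set of pairs $(\mathbf t(\varphi(u),w_1,\dots,w_n),\mathbf t(\varphi(v),w_1,\dots,w_n))$ with $u=v$ or $v=u$ in $\Sigma$ ($u,v\in\Omega_B\mathsf M$), $\varphi:\Omega_B\mathsf M\to\Omega_A\mathsf M$ a continuous homomorphism, $\mathbf t$ a monoid term, $w_i\in\Omega_A\mathsf M$; $\Sigma_{2\alpha+1}$ is the transitive closure of $\Sigma_{2\alpha}$, $\Sigma_{2\alpha+2}$ the topological closure of $\Sigma_{2\alpha+1}$, unions at limit ordinals; $u=v$ is provable from $\Sigma$ if $(u,v)\in\bigcup_\alpha\Sigma_\alpha$. $\Sigma$ is h-strong within $\mathsf M$ if every $\mathsf M$-pseudoidentity valid in $[\![\Sigma]\!]$ is provable from $\Sigma$. *)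

(* Defs.v *)
From mathcomp Require Import all_boot.
Set Implicit Arguments. Unset Strict Implicit. Unset Printing Implicit Defensive.

Record FinMon := {
  fcar :> finType;
  fmul : fcar -> fcar -> fcar;
  fone : fcar;
  fmulA : forall x y z, fmul x (fmul y z) = fmul (fmul x y) z;
  fmul1m : forall x, fmul fone x = x;
  fmulm1 : forall x, fmul x fone = x }.
Arguments fmul {f}. Arguments fone {f}.

Definition is_mhom (M N : FinMon) (h : M -> N) : Prop :=
  h fone = fone /\ forall x y, h (fmul x y) = fmul (h x) (h y).

Definition is_group (T : FinMon) : Prop :=
  forall x : T, exists y : T, fmul x y = fone /\ fmul y x = fone.

(* ---------- the free profinite monoid Omega_A M ----------
   realised (for A finite) as the monoid of A-ary implicit operations on M:
   families of operations on all finite monoids commuting with all monoid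
   homomorphisms; topology = pointwise (product) topology. *)
Record Omega (A : finType) := {
  oev : forall M : FinMon, (A -> M) -> M;
  onat : forall (M N : FinMon) (h : M -> N) (a : A -> M),
      is_mhom h -> h (oev a) = oev (h \o a) }.
Arguments oev {A} o M a.

Section OmegaOps.
Variable A : finType.

Lemma omul_nat (u v : Omega A) (M N : FinMon) (h : M -> N) (a : A -> M) :
  is_mhom h -> h (fmul (oev u M a) (oev v M a)) =
               fmul (oev u N (h \o a)) (oev v N (h \o a)).
Proof. move=> hh; case: (hh) => _ hM; rewrite hM; congr fmul; exact: onat. Qed.

Definition omul (u v : Omega A) : Omega A :=
  @Build_Omega A (fun M a => fmul (oev u M a) (oev v M a)) (@omul_nat u v).

Lemma oone_nat (M N : FinMon) (h : M -> N) (a : A -> M) :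
  is_mhom h -> h fone = fone.
Proof. by case. Qed.

Definition oone : Omega A := @Build_Omega A (fun M _ => fone) oone_nat.

(* u and v agree on all finite monoids with at most m elements: these sets
   form a base of the neighbourhoods of the (product/profinite) topology *)
Definition agree (m : nat) (u v : Omega A) : Prop :=
  forall (M : FinMon), #|M| <= m -> forall a : A -> M, oev u M a = oev v M a.

(* value of the monoid term t (a word in the variables x_0 = x, x_1..x_n)
   at x_0 := x, x_i := w_(i-1) *)
Definition eval_term (t : seq nat) (x : Omega A) (w : seq (Omega A)) : Omega A :=
  foldr omul oone [seq nth x (x :: w) i | i <- t].
End OmegaOps.

Definition cont_hom (B A : finType) (phi : Omega B -> Omega A) : Prop :=
  phi (oone B) = oone A /\
  (forall x y, phi (omul x y) = omul (phi x) (phi y)) /\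
  (forall u n, exists m, forall u', agree m u u' -> agree n (phi u) (phi u')).

Definition cont_hom_fin (B : finType) (T : FinMon) (phi : Omega B -> T) : Prop :=
  phi (oone B) = fone /\
  (forall x y, phi (omul x y) = fmul (phi x) (phi y)) /\
  (forall u, exists m, forall u', agree m u u' -> phi u = phi u').

Definition pseudoidentities := forall B : finType, Omega B -> Omega B -> Prop.

Definition holds_in (T : FinMon) (B : finType) (u v : Omega B) : Prop :=
  forall phi : Omega B -> T, cont_hom_fin phi -> phi u = phi v.

Definition models (Sigma : pseudoidentities) (T : FinMon) : Prop :=
  forall B u v, Sigma B u v -> holds_in T u v.

Definition Sigma0 (Sigma : pseudoidentities) (A : finType) (p q : Omega A) : Prop :=
  exists (B : finType) (u v : Omega B) (phi : Omega B -> Omega A)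
         (t : seq nat) (w : seq (Omega A)),
    (Sigma B u v \/ Sigma B v u) /\ cont_hom phi /\
    p = eval_term t (phi u) w /\ q = eval_term t (phi v) w.

(* union of the transfinite sequence Sigma_alpha = least subset of
   Omega_A x Omega_A containing Sigma_0, transitively closed and
   topologically closed *)
Inductive provable (Sigma : pseudoidentities) (A : finType) :
    Omega A -> Omega A -> Prop :=
| prov_base p q : Sigma0 Sigma p q -> provable Sigma p q
| prov_trans p q r : provable Sigma p q -> provable Sigma q r -> provable Sigma p r
| prov_closure p q :
    (forall m, exists p' q', provable Sigma p' q' /\ agree m p p' /\ agree m q q') ->
    provable Sigma p q.

Definition h_strong (Sigma : pseudoidentities) : Prop :=
  forall (A : finType) (u v : Omega A),
    (forall T : FinMon, models Sigma T -> holds_in T u v) -> provable Sigma u v.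

(* Main.v *)
Require Import Defs.
From mathcomp Require Import all_boot zify.
From Stdlib Require Import Lia FunctionalExtensionality ProofIrrelevance ClassicalEpsilon Classical.
Set Implicit Arguments. Unset Strict Implicit. Unset Printing Implicit Defensive.

Section Pow.
Variable M : FinMon.
Implicit Types g x y : M.
Definition powF g n : M := iter n (fmul g) fone.
Lemma powF0 g : powF g 0 = fone. Proof. by []. Qed.
Lemma powFS g n : powF g n.+1 = fmul g (powF g n). Proof. by []. Qed.
Lemma powFD g m n : powF g (m + n) = fmul (powF g m) (powF g n).
Proof. elim: m => [|m IH]; first by rewrite add0n powF0 fmul1m. by rewrite addSn !powFS IH fmulA. Qed.
Lemma powF1 g : powF g 1 = g. Proof. by rewrite powFS powF0 fmulm1. Qed.
Lemma powFSr g n : powF g n.+1 = fmul (powF g n) g.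
Proof. by rewrite -addn1 powFD powF1. Qed.
Lemma powFM g m n : powF g (m * n) = powF (powF g m) n.
Proof. elim: n => [|n IH]; first by rewrite muln0. by rewrite mulnS powFD IH powFS. Qed.
Lemma powFC g m n : fmul (powF g m) (powF g n) = fmul (powF g n) (powF g m).
Proof. by rewrite -!powFD addnC. Qed.
Definition idem x := fmul x x = x.
Lemma idem_pow x n : idem x -> 0 < n -> powF x n = x.
Proof. move=> hx; elim: n => [//|[|n] IH _]; first by rewrite powF1. by rewrite powFS IH // hx. Qed.

Lemma pigeon g : exists i j, i < j <= #|M| /\ powF g i = powF g j.
Proof.
pose f := fun i : 'I_#|M|.+1 => powF g i.
have : ~~ injectiveb f.
  apply/negP => /injectiveP inj; have := leq_card f inj; by rewrite card_ord ltnn.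
move/injectivePn => [i [j neq eq]].
case: (ltngtP i j) => [lt|gt|e]; last by move: neq; rewrite (val_inj e) eqxx.
- exists i, j; split => //; by rewrite lt -ltnS ltn_ord.
- exists j, i; split => //; by rewrite gt -ltnS ltn_ord.
Qed.

Lemma pow_period1 g i p l : powF g (i + p) = powF g i -> i <= l -> powF g (l + p) = powF g l.
Proof.
move=> hp il; rewrite -(subnKC il) -addnA (addnC (l - i)) addnA powFD hp -powFD.
by [].
Qed.
Lemma pow_period g i p l t : powF g (i + p) = powF g i -> i <= l -> powF g (l + p * t) = powF g l.
Proof.
move=> hp il; elim: t => [|t IH]; first by rewrite muln0 addn0.
rewrite mulnS (addnC p) addnA (pow_period1 hp) //; exact: leq_trans il (leq_addr _ _).
Qed.

Lemma idem_of_period g i p n : powF g (i + p) = powF g i -> 0 < p -> i <= n -> p %| n ->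
  idem (powF g n).
Proof.
move=> hp p0 il /dvdnP [t et]; subst n; rewrite /idem -powFD.
by rewrite [X in _ + X]mulnC (pow_period _ hp).
Qed.

Lemma fact_idem g j : #|M| <= j -> idem (powF g j`!).
Proof.
move=> hj; case: (pigeon g) => i [j0 [/andP [ij j0M] e]].
apply: (@idem_of_period g i (j0 - i)).
- by rewrite subnKC ?e // ltnW.
- by rewrite subn_gt0.
- apply: leq_trans (fact_geq j); apply: leq_trans hj; exact: leq_trans (ltnW ij) j0M.
- apply: dvdn_fact; rewrite subn_gt0 ij /=; apply: leq_trans hj; exact: leq_trans (leq_subr _ _) j0M.
Qed.

Lemma idem_pow_uniq g a b : 0 < a -> 0 < b -> idem (powF g a) -> idem (powF g b) ->
  powF g a = powF g b.
Proof.
move=> a0 b0 ha hb.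
by rewrite -{1}(idem_pow ha b0) -powFM mulnC powFM (idem_pow hb a0).
Qed.

Definition omegaF g := powF g (#|M|`!).
Lemma omega_idem g : idem (omegaF g).
Proof. exact: fact_idem. Qed.
Lemma omegaE g j : #|M| <= j -> powF g j`! = omegaF g.
Proof. move=> hj; apply: idem_pow_uniq => //; [exact: fact_gt0|exact: fact_gt0|exact: fact_idem|exact: omega_idem]. Qed.
Lemma omega_of_idem x : idem x -> omegaF x = x.
Proof. move=> hx; apply: idem_pow => //; exact: fact_gt0. Qed.

Lemma powF_inv_uniq G a b : 0 < a -> 0 < b -> idem (powF G a) -> idem (powF G b) ->
  powF G (a.*2.-1) = powF G (b.*2.-1).
Proof.
move=> a0 b0 ha hb; have eab := idem_pow_uniq a0 b0 ha hb.
have key : forall c, 0 < c -> idem (powF G c) -> powF G b = powF G c ->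
    fmul (powF G (c.*2.-1)) G = powF G b /\ fmul (powF G (c.*2.-1)) (powF G b) = powF G (c.*2.-1).
  move=> c c0 hc ebc; split.
    by rewrite -powFSr prednK ?double_gt0 // -addnn powFD -ebc hb.
  rewrite ebc -powFD; have -> : c.*2.-1 + c = c.-1 + (c + c).
    rewrite -!addnn; lia.
  by rewrite powFD powFD hc -powFD -addnn -{3}(prednK c0) addSn.
have [ka1 ka2] := key a a0 ha (esym eab).
have [kb1 kb2] := key b b0 hb erefl.
rewrite -ka2 -kb1 fmulA.
by rewrite (powFC G (a.*2.-1) (b.*2.-1)) -fmulA ka1 kb2.
Qed.

Definition om1F g := powF g ((#|M|`!).*2.-1).
Lemma om1_r g : fmul g (om1F g) = omegaF g.
Proof.
rewrite /om1F -powFS prednK ?double_gt0 ?fact_gt0 // -addnn powFD; exact: omega_idem.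
Qed.
Lemma om1_l g : fmul (om1F g) g = omegaF g.
Proof. by rewrite -(powF1 g) {1}powF1 powFC powF1 om1_r. Qed.
End Pow.

Section Hom.
Variables (M N : FinMon) (h : M -> N).
Hypothesis hh : is_mhom h.
Lemma hom_pow g n : h (powF g n) = powF (h g) n.
Proof. case: hh => h1 hM; elim: n => [|n IH] //=. by rewrite hM IH. Qed.
Lemma hom_idem x : idem x -> idem (h x).
Proof. case: hh => h1 hM; by rewrite /idem -hM => ->. Qed.
Lemma hom_omega g : h (omegaF g) = omegaF (h g).
Proof.
rewrite /omegaF hom_pow; apply: idem_pow_uniq; try exact: fact_gt0.
- by rewrite -hom_pow; apply: hom_idem; exact: omega_idem.
- exact: omega_idem.
Qed.
Lemma hom_om1 g : h (om1F g) = om1F (h g).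
Proof.
rewrite /om1F hom_pow; apply: powF_inv_uniq; try exact: fact_gt0.
- by rewrite -hom_pow; apply: hom_idem; exact: omega_idem.
- exact: omega_idem.
Qed.
End Hom.

Section OmegaBasics.
Variable A : finType.
Implicit Types x y z : Omega A.

Lemma oext x y : (forall M a, oev x M a = oev y M a) -> x = y.
Proof.
case: x y => [f fn] [g gn] /= H.
have E : f = g.
  apply: functional_extensionality_dep => M; apply: functional_extensionality => a; exact: H.
subst g; f_equal; exact: proof_irrelevance.
Qed.

Lemma omulA x y z : omul x (omul y z) = omul (omul x y) z.
Proof. apply: oext => M a /=; exact: fmulA. Qed.
Lemma omul1 x : omul (oone A) x = x.
Proof. apply: oext => M a /=; exact: fmul1m. Qed.
Lemma omulr1 x : omul x (oone A) = x.
Proof. apply: oext => M a /=; exact: fmulm1. Qed.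

Lemma agree_mono m n x y : m <= n -> agree n x y -> agree m x y.
Proof. move=> mn H M hM a; apply: H; exact: leq_trans hM mn. Qed.
Lemma agree_refl m x : agree m x x. Proof. by []. Qed.
Lemma agree_sym m x y : agree m x y -> agree m y x.
Proof. move=> H M hM a; by rewrite H. Qed.
Lemma agree_trans m x y z : agree m x y -> agree m y z -> agree m x z.
Proof. move=> H1 H2 M hM a; by rewrite H1 // H2. Qed.
Lemma agree_mul m x x' y y' : agree m x x' -> agree m y y' -> agree m (omul x y) (omul x' y').
Proof. move=> H1 H2 M hM a /=; by rewrite H1 // H2. Qed.
Lemma agree_all x y : (forall m, agree m x y) -> x = y.
Proof. move=> H; apply: oext => M a; exact: (H #|M|). Qed.

Lemma oomega_nat x (M N : FinMon) (h : M -> N) (a : A -> M) :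
  is_mhom h -> h (omegaF (oev x M a)) = omegaF (oev x N (h \o a)).
Proof. move=> hh; by rewrite hom_omega // onat. Qed.
Definition oomega x : Omega A := @Build_Omega A (fun M a => omegaF (oev x M a)) (@oomega_nat x).
Lemma oom1_nat x (M N : FinMon) (h : M -> N) (a : A -> M) :
  is_mhom h -> h (om1F (oev x M a)) = om1F (oev x N (h \o a)).
Proof. move=> hh; by rewrite hom_om1 // onat. Qed.
Definition oom1 x : Omega A := @Build_Omega A (fun M a => om1F (oev x M a)) (@oom1_nat x).

Lemma oom1_r x : omul x (oom1 x) = oomega x.
Proof. apply: oext => M a /=; exact: om1_r. Qed.
Lemma oom1_l x : omul (oom1 x) x = oomega x.
Proof. apply: oext => M a /=; exact: om1_l. Qed.
Lemma agree_omega m x y : agree m x y -> agree m (oomega x) (oomega y).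
Proof. move=> H M hM a /=; by rewrite H. Qed.
Lemma agree_om1 m x y : agree m x y -> agree m (oom1 x) (oom1 y).
Proof. move=> H M hM a /=; by rewrite H. Qed.
Lemma oomega_idem x : omul (oomega x) (oomega x) = oomega x.
Proof. apply: oext => M a /=; exact: omega_idem. Qed.
Lemma oomega_of_idem x : omul x x = x -> oomega x = x.
Proof.
move=> H; apply: oext => M a /=; apply: omega_of_idem.
by rewrite /idem; have := f_equal (fun z => oev z M a) H.
Qed.

Definition opow x n : Omega A := iter n (omul x) (oone A).
Lemma opowE x n M a : oev (opow x n) M a = powF (oev x M a) n.
Proof. elim: n => [|n IH] //=; by rewrite IH. Qed.

Lemma agree_hom k x y (M N : FinMon) (h : M -> N) (a : A -> M) :
  agree k x y -> #|M| <= k -> is_mhom h -> oev x N (h \o a) = oev y N (h \o a).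
Proof. move=> H hM hh; by rewrite -!onat // H. Qed.

Lemma agree0 x y : agree 0 x y.
Proof.
move=> M; rewrite leqn0 => /eqP/card0_eq/(_ fone).
by rewrite !inE.
Qed.
End OmegaBasics.

Section Subst.
Variables B A : finType.
Lemma gen_nat (b : B) (M N : FinMon) (h : M -> N) (a : B -> M) :
  is_mhom h -> h (a b) = (h \o a) b.
Proof. by []. Qed.
Definition gen (b : B) : Omega B := @Build_Omega B (fun M a => a b) (@gen_nat b).
Definition word (w : seq B) : Omega B := foldr (@omul B) (oone B) (map gen w).
Definition evalw (M : FinMon) (c : B -> M) (w : seq B) : M := foldr fmul fone (map c w).
Lemma wordE w M c : oev (word w) M c = evalw c w.
Proof. elim: w => [|b w IH] //=; by rewrite IH. Qed.
Lemma word_cat w1 w2 : word (w1 ++ w2) = omul (word w1) (word w2).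
Proof.
rewrite /word map_cat; elim: (map gen w1) => [|x l IH] /=; first by rewrite omul1.
by rewrite IH omulA.
Qed.

Variable g : B -> Omega A.
Lemma subst_nat (x : Omega B) (M N : FinMon) (h : M -> N) (a : A -> M) :
  is_mhom h -> h (oev x M (fun b => oev (g b) M a)) = oev x N (fun b => oev (g b) N (h \o a)).
Proof.
move=> hh; rewrite onat //; congr (oev x N); apply: functional_extensionality => b /=.
exact: onat.
Qed.
Definition osubst (x : Omega B) : Omega A :=
  @Build_Omega A (fun M a => oev x M (fun b => oev (g b) M a)) (@subst_nat x).
Lemma osubst_gen b : osubst (gen b) = g b.
Proof. by apply: oext. Qed.
Lemma osubst_hom : cont_hom osubst.
Proof.
split; first by apply: oext.
split; first by move=> x y; apply: oext.
move=> u n; exists n => u' H M hM a /=; exact: H.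
Qed.
End Subst.

Lemma cont_hom_comp (B C A : finType) (phi : Omega B -> Omega C) (psi : Omega C -> Omega A) :
  cont_hom phi -> cont_hom psi -> cont_hom (psi \o phi).
Proof.
move=> [p1 [pM pc]] [q1 [qM qc]]; split; first by rewrite /= p1 q1.
split; first by move=> x y /=; rewrite pM qM.
move=> u n; case: (qc (phi u) n) => m Hm; case: (pc u m) => m' Hm'.
exists m' => u' H; exact: Hm (Hm' _ H).
Qed.

Lemma cont_hom_fin_comp (B A : finType) (T : FinMon) (phi : Omega B -> Omega A) (psi : Omega A -> T) :
  cont_hom phi -> cont_hom_fin psi -> cont_hom_fin (psi \o phi).
Proof.
move=> [p1 [pM pc]] [q1 [qM qc]]; split; first by rewrite /= p1 q1.
split; first by move=> x y /=; rewrite pM qM.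
move=> u; case: (qc (phi u)) => m Hm; case: (pc u m) => m' Hm'.
exists m' => u' H; exact: Hm (Hm' _ H).
Qed.

Lemma const_hom (B A : finType) : cont_hom (fun _ : Omega B => oone A).
Proof.
split=> //; split; first by move=> x y; rewrite omul1.
by move=> u n; exists 0.
Qed.

Lemma id_hom (A : finType) : cont_hom (@id (Omega A)).
Proof. split=> //; split=> // u n; by exists n. Qed.

Section Eval.
Variable A : finType.
Implicit Types (x r : Omega A) (w : seq (Omega A)).
Definition sh (i : nat) := if i is 0 then 0 else i.+1.
Lemma nth_sh (x r : Omega A) w i : nth x (x :: r :: w) (sh i) = nth x (x :: w) i.
Proof. by case: i. Qed.
Lemma eval_mulL t x w r : omul r (eval_term t x w) = eval_term (1 :: map sh t) x (r :: w).
Proof.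
rewrite /eval_term /= -map_comp; congr (omul r (foldr _ _ _)).
apply: eq_map => i /=; by rewrite nth_sh.
Qed.
Lemma foldr_cat (l1 l2 : seq (Omega A)) :
  foldr (@omul A) (oone A) (l1 ++ l2) = omul (foldr (@omul A) (oone A) l1) (foldr (@omul A) (oone A) l2).
Proof. elim: l1 => [|a l IH] /=; first by rewrite omul1. by rewrite IH omulA. Qed.
Lemma eval_mulR t x w r : omul (eval_term t x w) r = eval_term (map sh t ++ [:: 1]) x (r :: w).
Proof.
rewrite /eval_term map_cat foldr_cat /= omulr1 -map_comp; congr (omul (foldr _ _ _) r).
apply: eq_map => i /=; by rewrite nth_sh.
Qed.
Lemma eval_hom (A' : finType) (psi : Omega A -> Omega A') t x w : cont_hom psi ->
  psi (eval_term t x w) = eval_term t (psi x) (map psi w).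
Proof.
move=> [p1 [pM _]]; rewrite /eval_term; elim: t => [|i t IH] //=.
rewrite pM IH; congr (omul _ _).
case: i => [|i] //=.
case: (ltnP i (size w)) => hi; first by rewrite (nth_map x).
by rewrite !nth_default ?size_map.
Qed.
End Eval.

Section ProvInd.
Variables (Sigma : pseudoidentities) (A : finType) (P : Omega A -> Omega A -> Prop).
Hypothesis Hb : forall p q, Sigma0 Sigma p q -> P p q.
Hypothesis Ht : forall p q r, provable Sigma p q -> P p q -> provable Sigma q r -> P q r -> P p r.
Hypothesis Hc : forall p q, (forall m, exists p' q', provable Sigma p' q' /\ P p' q' /\ agree m p p' /\ agree m q q') -> P p q.
Fixpoint prov_ind2 p q (H : provable Sigma p q) {struct H} : P p q :=
  match H with
  | prov_base p q h => Hb h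
  | prov_trans p q r h1 h2 => Ht h1 (prov_ind2 h1) h2 (prov_ind2 h2)
  | prov_closure p q h => Hc (fun m => match h m with
        ex_intro p' (ex_intro q' (conj hpq (conj a1 a2))) =>
          ex_intro _ p' (ex_intro _ q' (conj hpq (conj (prov_ind2 hpq) (conj a1 a2)))) end)
  end.
End ProvInd.

Section Prov.
Variable Sigma : pseudoidentities.
Local Notation prov := (provable Sigma).

Lemma prov_sym (A : finType) (p q : Omega A) : prov p q -> prov q p.
Proof.
move=> H; elim/prov_ind2: H => {p q}.
- move=> p q [B [u [v [phi [t [w [huv [hphi [-> ->]]]]]]]]].
  apply: prov_base; exists B, v, u, phi, t, w; split=> //; by case: huv; [right|left].
- move=> p q r _ h1 _ h2; exact: prov_trans h2 h1.
- move=> p q H; apply: prov_closure => m; case: (H m) => p' [q' [_ [h [a1 a2]]]].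
  by exists q', p'.
Qed.

Lemma prov_mulL (A : finType) (r p q : Omega A) : prov p q -> prov (omul r p) (omul r q).
Proof.
move=> H; elim/prov_ind2: H => {p q}.
- move=> p q [B [u [v [phi [t [w [huv [hphi [-> ->]]]]]]]]].
  apply: prov_base; exists B, u, v, phi, (1 :: map sh t), (r :: w); split=> //; split=> //.
  by rewrite !eval_mulL.
- move=> p q s _ h1 _ h2; exact: prov_trans h1 h2.
- move=> p q H; apply: prov_closure => m; case: (H m) => p' [q' [_ [h [a1 a2]]]].
  exists (omul r p'), (omul r q'); split=> //; split; exact: agree_mul.
Qed.

Lemma prov_mulR (A : finType) (r p q : Omega A) : prov p q -> prov (omul p r) (omul q r).
Proof.
move=> H; elim/prov_ind2: H => {p q}.
- move=> p q [B [u [v [phi [t [w [huv [hphi [-> ->]]]]]]]]].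
  apply: prov_base; exists B, u, v, phi, (map sh t ++ [:: 1]), (r :: w); split=> //; split=> //.
  by rewrite !eval_mulR.
- move=> p q s _ h1 _ h2; exact: prov_trans h1 h2.
- move=> p q H; apply: prov_closure => m; case: (H m) => p' [q' [_ [h [a1 a2]]]].
  exists (omul p' r), (omul q' r); split=> //; split; exact: agree_mul.
Qed.

Lemma prov_hom (A A' : finType) (psi : Omega A -> Omega A') (p q : Omega A) :
  cont_hom psi -> prov p q -> prov (psi p) (psi q).
Proof.
move=> hpsi H; elim/prov_ind2: H => {p q}.
- move=> p q [B [u [v [phi [t [w [huv [hphi [-> ->]]]]]]]]].
  apply: prov_base; exists B, u, v, (psi \o phi), t, (map psi w); split=> //; split.
    exact: cont_hom_comp.
  by rewrite !eval_hom.
- move=> p q s _ h1 _ h2; exact: prov_trans h1 h2.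
- move=> p q H; apply: prov_closure => n.
  case: hpsi => _ [_ hc]; case: (hc p n) => m1 H1; case: (hc q n) => m2 H2.
  case: (H (maxn m1 m2)) => p' [q' [_ [h [a1 a2]]]].
  exists (psi p'), (psi q'); split=> //; split.
  + apply: H1; apply: agree_mono a1; exact: leq_maxl.
  + apply: H2; apply: agree_mono a2; exact: leq_maxr.
Qed.

Lemma prov_sigma (B A : finType) (u v : Omega B) (phi : Omega B -> Omega A) :
  @Sigma B u v -> cont_hom phi -> prov (phi u) (phi v).
Proof.
move=> huv hphi; apply: prov_base; exists B, u, v, phi, [:: 0], [::]; split; first by left.
by split=> //; rewrite /eval_term /= !omulr1.
Qed.

Lemma prov_refl (A : finType) (p : Omega A) : (exists B u v, @Sigma B u v) -> prov p p.
Proof.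
move=> [B [u [v huv]]]; apply: prov_base.
exists B, u, v, (fun _ => oone A), [:: 1], [:: p]; split; first by left.
by split; [exact: const_hom | rewrite /eval_term /= omulr1].
Qed.
End Prov.

Definition asb (P : Prop) : bool := if excluded_middle_informative P then true else false.
Lemma asbP (P : Prop) : reflect P (asb P).
Proof. rewrite /asb; case: excluded_middle_informative => h; by constructor. Qed.

Section Quot.
Variables (S : Type) (op : S -> S -> S) (e : S) (X : finType) (kap : S -> X).
Hypotheses (opA : forall x y z, op x (op y z) = op (op x y) z)
           (op1 : forall x, op e x = x) (opr1 : forall x, op x e = x).
Hypothesis kapM : forall x x' y y', kap x = kap x' -> kap y = kap y' -> kap (op x y) = kap (op x' y').

Definition qpred (x : X) : bool := asb (exists s, kap s = x).
Definition QT := {x : X | qpred x}.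
Lemma qpred_kap s : qpred (kap s). Proof. apply/asbP; by exists s. Qed.
Definition qphi (s : S) : QT := exist _ (kap s) (qpred_kap s).
Definition qpre (q : QT) : S :=
  proj1_sig (constructive_indefinite_description _ (elimT (asbP _) (valP q))).
Lemma qpre_kap q : kap (qpre q) = val q.
Proof. rewrite /qpre; by case: constructive_indefinite_description. Qed.
Lemma qpreK q : qphi (qpre q) = q.
Proof. apply: val_inj; exact: qpre_kap. Qed.
Lemma qphi_eq s t : qphi s = qphi t <-> kap s = kap t.
Proof. split; [by move/(f_equal val) | by move=> h; apply: val_inj]. Qed.
Definition qmul (q r : QT) : QT := qphi (op (qpre q) (qpre r)).
Lemma qphiM s t : qphi (op s t) = qmul (qphi s) (qphi t).
Proof. apply/qphi_eq; apply: kapM; by rewrite qpre_kap. Qed.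
Lemma qsurj q : exists s, q = qphi s. Proof. by exists (qpre q); rewrite qpreK. Qed.
Lemma qmulA : forall x y z, qmul x (qmul y z) = qmul (qmul x y) z.
Proof.
move=> x y z; case: (qsurj x) => s ->; case: (qsurj y) => t ->; case: (qsurj z) => r ->.
by rewrite -!qphiM opA.
Qed.
Lemma qmul1 : forall x, qmul (qphi e) x = x.
Proof. move=> x; case: (qsurj x) => s ->; by rewrite -qphiM op1. Qed.
Lemma qmulr1 : forall x, qmul x (qphi e) = x.
Proof. move=> x; case: (qsurj x) => s ->; by rewrite -qphiM opr1. Qed.
Definition QM : FinMon := @Build_FinMon QT qmul (qphi e) qmulA qmul1 qmulr1.
Definition qh : S -> QM := qphi.
Lemma qh1 : qh e = fone. Proof. by []. Qed.
Lemma qhM s t : qh (op s t) = fmul (qh s) (qh t). Proof. exact: qphiM. Qed.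
Lemma qh_eq s t : qh s = qh t <-> kap s = kap t. Proof. exact: qphi_eq. Qed.
Lemma qh_surj (q : QM) : exists s, q = qh s. Proof. exact: qsurj. Qed.
End Quot.

Section Codes.
Variable A : finType.
Definition cdata (n : nat) := ({ffun 'I_n * 'I_n -> 'I_n} * 'I_n * {ffun A -> 'I_n})%type.
Definition cvalid n (c : cdata n) : bool :=
  [&& [forall x, forall y, forall z, c.1.1 (x, c.1.1 (y, z)) == c.1.1 (c.1.1 (x, y), z)],
      [forall x, c.1.1 (c.1.2, x) == x] & [forall x, c.1.1 (x, c.1.2) == x]].
Section MonOf.
Variables (n : nat) (c : cdata n) (H : cvalid c).
Definition cmul (x y : 'I_n) : 'I_n := c.1.1 (x, y).
Lemma cmulA : forall x y z, cmul x (cmul y z) = cmul (cmul x y) z.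
Proof. move: H => /and3P [/forallP h _ _] x y z; apply/eqP; move: (h x) => /forallP/(_ y)/forallP/(_ z); exact. Qed.
Lemma cmul1 : forall x, cmul c.1.2 x = x.
Proof. move: H => /and3P [_ /forallP h _] x; apply/eqP; exact: h x. Qed.
Lemma cmulr1 : forall x, cmul x c.1.2 = x.
Proof. move: H => /and3P [_ _ /forallP h] x; apply/eqP; exact: h x. Qed.
Definition mon_of : FinMon := @Build_FinMon 'I_n cmul c.1.2 cmulA cmul1 cmulr1.
End MonOf.

Variable k : nat.
Definition code := {n : 'I_k.+1 & {c : cdata n | cvalid c}}.
Definition Mc (cd : code) : FinMon := mon_of (valP (tagged cd)).
Definition ac (cd : code) : A -> Mc cd := fun b => (val (tagged cd)).2 b.
Definition Ek (x : Omega A) : {ffun code -> 'I_k.+1} :=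
  [ffun cd : code => inord (@nat_of_ord (tag cd) (oev x (Mc cd) (ac cd)))].

Lemma Ek_agree x y : Ek x = Ek y <-> agree k x y.
Proof.
split.
- move=> E M hM a.
  pose n : 'I_k.+1 := Ordinal (hM : #|M| < k.+1).
  pose c : cdata n := ([ffun p => enum_rank (fmul (enum_val p.1) (enum_val p.2))],
                      enum_rank (fone : M), [ffun b => enum_rank (a b)]).
  have cv : cvalid c.
    apply/and3P; split.
    + apply/forallP => p; apply/forallP => q; apply/forallP => r; rewrite /= !ffunE /= !enum_rankK.
      by rewrite fmulA.
    + apply/forallP => p; by rewrite /= !ffunE /= !enum_rankK fmul1m enum_valK.
    + apply/forallP => p; by rewrite /= !ffunE /= !enum_rankK fmulm1 enum_valK.
  pose cd : code := existT _ n (exist _ c cv).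
  have hh : is_mhom (enum_val : Mc cd -> M).
    split; first by rewrite /= enum_rankK.
    by move=> p q; rewrite /= /cmul /= ffunE /= enum_rankK.
  have ea : a = (enum_val : Mc cd -> M) \o ac cd.
    apply: functional_extensionality => b; by rewrite /= /ac /= ffunE enum_rankK.
  rewrite ea -!onat //; congr enum_val.
  move/ffunP/(_ cd): E; rewrite !ffunE => /(congr1 val).
  rewrite /= !inordK; first by move=> /val_inj.
  + rewrite ltnS; apply: leq_trans (ltnW (ltn_ord _)) (_ : (n : nat) <= k) => //.
  + rewrite ltnS; apply: leq_trans (ltnW (ltn_ord _)) (_ : (n : nat) <= k) => //.
- move=> H; apply/ffunP => cd; rewrite !ffunE H //.
  by rewrite card_ord -ltnS ltn_ord.
Qed.
End Codes.

Section Density.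
Variable B : finType.

Lemma density (x : Omega B) k : exists w : seq B, agree k x (word w).
Proof.
pose kap := fun w : seq B => Ek k (word w).
have kapM : forall x x' y y', kap x = kap x' -> kap y = kap y' -> kap (x ++ y) = kap (x' ++ y').
  move=> w1 w1' w2 w2' /Ek_agree h1 /Ek_agree h2; apply/Ek_agree; rewrite !word_cat.
  exact: agree_mul.
pose W := QM (@catA B) (@cat0s B) (@cats0 B) kapM.
pose hW := qh (@catA B) (@cat0s B) (@cats0 B) kapM.
pose gam := fun b : B => (hW [:: b] : W).
have key : forall (M : FinMon) (a : B -> M) s, #|M| <= k ->
    oev (word (qpre (hW s))) M a = oev (word s) M a.
  move=> M a s hM; have := qpre_kap (hW s); rewrite /= => /Ek_agree H; exact: H.
exists (qpre (oev x W gam)) => M hM a.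
pose proj := fun q : W => oev (word (qpre q)) M a.
have hp : is_mhom proj.
  split; first by rewrite /proj key.
  move=> q r; rewrite /proj /= /qmul key // word_cat //.
have ea : a = proj \o gam.
  apply: functional_extensionality => b; by rewrite /= /proj key //= fmulm1.
by rewrite {1}ea -onat.
Qed.

Lemma word_hom (T : FinMon) (phi : Omega B -> T) w : cont_hom_fin phi ->
  phi (word w) = evalw (phi \o @gen B) w.
Proof.
move=> [p1 [pM _]]; elim: w => [|b w IH] //=.
rewrite /word /= pM -/(word w) IH //.
Qed.

Lemma determ (T : FinMon) (phi : Omega B -> T) : cont_hom_fin phi ->
  forall x, phi x = oev x T (phi \o @gen B).
Proof.
move=> hphi x; case: (hphi) => _ [_ hc]; case: (hc x) => m Hm.
case: (density x (maxn m #|T|)) => w hw.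
rewrite (Hm (word w)); last by apply: agree_mono hw; exact: leq_maxl.
rewrite word_hom // -wordE; symmetry; apply: hw; exact: leq_maxr.
Qed.
End Density.

Section GroupLike.
Variable F : FinMon.
Lemma pow_sand (eps x : F) n : fmul eps x = x -> fmul x eps = x ->
  fmul eps (powF x n.+1) = powF x n.+1 /\ fmul (powF x n.+1) eps = powF x n.+1.
Proof.
move=> h1 h2; split; first by rewrite powFS fmulA h1.
by rewrite powFSr -fmulA h2.
Qed.
Lemma omega_sand (eps x : F) : fmul eps x = x -> fmul x eps = x ->
  fmul eps (omegaF x) = omegaF x /\ fmul (omegaF x) eps = omegaF x.
Proof. rewrite /omegaF -(prednK (fact_gt0 #|F|)); exact: pow_sand. Qed.

Lemma grouplike (eps : F) : idem eps -> exists e, idem e /\ fmul (fmul eps e) eps = e /\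
  forall y, omegaF (fmul (fmul e y) e) = e.
Proof.
pose SS := fun e : F => [set x | fmul (fmul e x) e == x].
suff : forall n eps, #|SS eps| <= n -> idem eps -> exists e, idem e /\ fmul (fmul eps e) eps = e /\
  forall y, omegaF (fmul (fmul e y) e) = e by move=> H; exact: H _ _ (leqnn _).
elim=> [|n IH] {}eps.
  rewrite leqn0 => /eqP/cards0_eq/setP/(_ eps) + he; by rewrite !inE (he : fmul eps eps = eps) he eqxx.
move=> hc he; have hE : fmul eps eps = eps := he.
case: (classic (forall y, omegaF (fmul (fmul eps y) eps) = eps)) => [H|].
  by exists eps; split=> //; split; [rewrite !hE | exact: H].
move=> /not_all_ex_not [y hy].
set e' := omegaF _ in hy.
have [h1 h2] : fmul eps e' = e' /\ fmul e' eps = e'.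
  apply: omega_sand; first by rewrite !fmulA hE.
  by rewrite -!fmulA hE.
have ie' : idem e' by exact: omega_idem.
have sub : SS e' \proper SS eps.
  apply/properP; split.
    apply/subsetP => z; rewrite /SS !inE => /eqP ez; apply/eqP.
    by rewrite -ez -!fmulA h2 !fmulA h1.
  exists eps; first by rewrite /SS inE !hE.
  rewrite /SS inE -fmulA h1 ie'; apply/eqP => e; by rewrite e in hy.
have := proper_card sub => lt.
case: (IH e') => //; first by rewrite -ltnS; exact: leq_trans lt hc.
move=> e [ie [se ge]]; exists e; split=> //; split=> //.
by rewrite -se !fmulA h1 -!fmulA h2.
Qed.
End GroupLike.

Section Level.
Variables (A : finType) (k : nat).
Lemma EkM : forall x x' y y' : Omega A, Ek k x = Ek k x' -> Ek k y = Ek k y' ->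
  Ek k (omul x y) = Ek k (omul x' y').
Proof. move=> x x' y y' /Ek_agree h1 /Ek_agree h2; apply/Ek_agree; exact: agree_mul. Qed.
Definition Fk := QM (@omulA A) (@omul1 A) (@omulr1 A) EkM.
Definition hk : Omega A -> Fk := qh (@omulA A) (@omul1 A) (@omulr1 A) EkM.
Lemma hk_eq s t : hk s = hk t <-> agree k s t.
Proof. rewrite /hk qh_eq; exact: Ek_agree. Qed.
Lemma hk1 : hk (oone A) = fone. Proof. by []. Qed.
Lemma hkM s t : hk (omul s t) = fmul (hk s) (hk t). Proof. exact: qhM. Qed.
Lemma hk_surj (q : Fk) : exists s, q = hk s. Proof. exact: qh_surj. Qed.
Lemma hk_pow z n : hk (opow z n) = powF (hk z) n.
Proof. elim: n => [|n IH] //=; by rewrite hkM IH. Qed.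
Lemma hk_omega z : hk (oomega z) = omegaF (hk z).
Proof.
pose j := maxn #|Fk| k.
rewrite -(@omegaE _ _ j) ?leq_maxl // -hk_pow; apply/hk_eq => M hM a /=.
by rewrite opowE omegaE // (leq_trans hM) // leq_maxr.
Qed.
End Level.

Section Limit.
Variable A : finType.
Implicit Types e s x y : Omega A.
Definition swc e s := omul (omul e s) e.
Definition GL k e := forall s, agree k (oomega (swc e s)) e.
Definition IDM e := omul e e = e.

Lemma step k e : IDM e -> GL k e -> exists e', IDM e' /\ GL k.+1 e' /\ agree k e' e.
Proof.
move=> ie ge.
have ieps : idem (hk k.+1 e) by rewrite /idem -hkM ie.
case: (grouplike ieps) => e0 [ie0 [se0 ge0]].
case: (hk_surj e0) => s' es'.
exists (oomega (swc e s')); split; first exact: oomega_idem.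
split; last exact: ge.
have he' : hk k.+1 (oomega (swc e s')) = e0.
  by rewrite hk_omega /swc !hkM -es' se0 omega_of_idem.
move=> s; apply/hk_eq; by rewrite hk_omega /swc !hkM he' ge0.
Qed.

Lemma GL0 : GL 0 (oone A). Proof. move=> s; exact: agree0. Qed.
Lemma IDM1 : IDM (oone A). Proof. exact: omul1. Qed.

Definition stepf k (p : {e | IDM e /\ GL k e}) : {e | IDM e /\ GL k.+1 e /\ agree k e (sval p)} :=
  constructive_indefinite_description _ (step (proj1 (svalP p)) (proj2 (svalP p))).
Fixpoint es k : {e | IDM e /\ GL k e} :=
  match k with
  | 0 => exist _ (oone A) (conj IDM1 GL0)
  | k'.+1 => let q := stepf (es k') in
             exist _ (sval q) (conj (proj1 (svalP q)) (proj1 (proj2 (svalP q))))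
  end.
Lemma es_coh1 k : agree k (sval (es k.+1)) (sval (es k)).
Proof. exact: (proj2 (proj2 (svalP (stepf (es k))))). Qed.
Lemma es_coh k j : k <= j -> agree k (sval (es j)) (sval (es k)).
Proof.
elim: j => [|j IH]; first by rewrite leqn0 => /eqP ->.
rewrite leq_eqVlt => /orP [/eqP -> //|]; rewrite ltnS => kj.
apply: agree_trans (IH kj); apply: agree_mono kj _; exact: es_coh1.
Qed.

Lemma elim_nat (M N : FinMon) (h : M -> N) (a : A -> M) :
  is_mhom h -> h (oev (sval (es #|M|)) M a) = oev (sval (es #|N|)) N (h \o a).
Proof.
move=> hh; rewrite onat //; case: (leqP #|M| #|N|) => c.
- apply: agree_hom (agree_sym (es_coh c)) (leqnn _) hh.
- apply: (es_coh (ltnW c)); exact: leqnn.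
Qed.
Definition elim : Omega A := @Build_Omega A (fun M a => oev (sval (es #|M|)) M a) elim_nat.

Lemma elim_idem : omul elim elim = elim.
Proof.
apply: oext => M a /=; have := f_equal (fun z => oev z M a) (proj1 (svalP (es #|M|))); exact.
Qed.
Lemma elim_gl s : oomega (swc elim s) = elim.
Proof.
apply: oext => M a /=; have := proj2 (svalP (es #|M|)) s M (leqnn _) a; exact.
Qed.
End Limit.

Definition U1 : FinMon := @Build_FinMon bool andb true andbA andTb andbT.

Lemma U1_not_group : ~ is_group U1.
Proof. move=> H; case: (H false) => y [/= h _]; by []. Qed.

Section Main.
Variable Sigma : pseudoidentities.
Variables (B0 : finType) (u0 v0 : Omega B0) (c0 : B0 -> bool).
Hypothesis S0 : @Sigma B0 u0 v0.
Hypothesis D0 : oev u0 U1 c0 <> oev v0 U1 c0.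
Local Notation prov := (provable Sigma).

Lemma Sne : exists B u v, @Sigma B u v.
Proof. by exists B0, u0, v0. Qed.

Lemma omega_prov (A : finType) (z : Omega A) : prov (oomega z) (oone A).
Proof.
pose g := fun b => if c0 b then oone A else oomega z.
have key : forall x : Omega B0, osubst g x = if oev x U1 c0 then oone A else oomega z.
  move=> x; apply: oext => M a /=.
  pose h := fun b : bool => if b then (fone : M) else omegaF (oev z M a).
  have hh : is_mhom (h : U1 -> M).
    split=> // [[] []] /=; rewrite ?fmul1m ?fmulm1 //; exact: (esym (omega_idem _)).
  have -> : (fun b => oev (g b) M a) = h \o c0.
    apply: functional_extensionality => b; by rewrite /g /h /=; case: (c0 b).
  rewrite -(@onat _ x U1 M h c0 hh); by case: (oev x U1 c0).
have P := prov_sigma S0 (osubst_hom g); rewrite !key in P.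
move: D0 P; case: (oev u0 U1 c0); case: (oev v0 U1 c0) => // _ P.
exact: prov_sym.
Qed.

Lemma prov_mul (A : finType) (p q p' q' : Omega A) :
  prov p q -> prov p' q' -> prov (omul p p') (omul q q').
Proof. move=> h1 h2; apply: prov_trans (prov_mulR p' h1) (prov_mulL q h2). Qed.

Section Fixed.
Variable A : finType.
Local Notation e := (elim A).
Local Notation sw := (swc e).
Lemma prov_rfl (p : Omega A) : prov p p. Proof. exact: prov_refl Sne. Qed.
Lemma e_prov : prov e (oone A).
Proof. rewrite -{1}(oomega_of_idem (elim_idem A)); exact: omega_prov. Qed.
Lemma prov_sw (s : Omega A) : prov s (sw s).
Proof.
have h := prov_sym e_prov.
rewrite /swc -{1}(omul1 s) -{1}(omulr1 (omul (oone A) s)).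
apply: prov_mul (prov_mul h (prov_rfl s)) h.
Qed.
Lemma prov_sw2 (x y : Omega A) : prov x y -> prov (sw x) (sw y).
Proof. move=> h; apply: prov_mul (prov_mul (prov_rfl _) h) (prov_rfl _). Qed.

Variable k : nat.
Definition Rel (s t : Omega A) := exists p q, prov p q /\ agree k (sw s) p /\ agree k (sw t) q.
Lemma Rel_prov s t : prov s t -> Rel s t.
Proof. move=> h; exists (sw s), (sw t); split; [exact: prov_sw2 | by []]. Qed.
Lemma Rel_agree s t : agree k s t -> Rel s t.
Proof.
move=> h; exists (sw s), (sw s); split; first exact: prov_rfl.
split=> //; rewrite /swc; apply: agree_mul (agree_mul (@agree_refl _ _ _) (agree_sym h)) (@agree_refl _ _ _).
Qed.
Lemma Rel_sym s t : Rel s t -> Rel t s.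
Proof. move=> [p [q [h [a1 a2]]]]; exists q, p; split=> //; exact: prov_sym. Qed.
Lemma Rel_trans s t r : Rel s t -> Rel t r -> Rel s r.
Proof.
move=> [p1 [q1 [h1 [a1 b1]]]] [p2 [q2 [h2 [a2 b2]]]].
exists (omul (omul p1 (oom1 q1)) p2), q2; split.
  apply: prov_trans h2; apply: prov_trans (prov_mul (prov_mul h1 (prov_rfl _)) (prov_rfl _)) _.
  rewrite oom1_r -{2}(omul1 p2); apply: prov_mul (omega_prov _) (prov_rfl _).
split=> //.
apply: agree_trans (_ : agree k _ (omul (omul (sw s) (oom1 (sw t))) (sw t))) _.
  have swe : forall x, omul (sw x) e = sw x by move=> x; rewrite /swc -omulA elim_idem.
  by rewrite -omulA oom1_l elim_gl swe.
apply: agree_mul (agree_mul a1 (agree_om1 b1)) a2.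
Qed.
Lemma Rel_mul s t s' t' : Rel s t -> Rel s' t' -> Rel (omul s s') (omul t t').
Proof.
move=> [p [q [h [a1 a2]]]] [p' [q' [h' [a1' a2']]]].
have R1 : forall x y, Rel (omul x y) (omul (omul x e) y).
  move=> x y; apply: Rel_prov; rewrite -{1}(omulr1 x).
  apply: prov_mul (prov_mul (prov_rfl x) (prov_sym e_prov)) (prov_rfl y).
have swM : forall x y, sw (omul (omul x e) y) = omul (sw x) (sw y).
  move=> x y; rewrite /swc !omulA -[omul (omul (omul e x) e) e]omulA elim_idem //.
apply: Rel_trans (R1 s s') _; apply: Rel_trans (Rel_sym (R1 t t')).
exists (omul p p'), (omul q q'); split; first exact: prov_mul.
by rewrite !swM; split; apply: agree_mul.
Qed.

Definition kap (s : Omega A) : {set {ffun code A k -> 'I_k.+1}} :=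
  [set f | asb (exists t, f = Ek k (sw t) /\ Rel s t)].
Lemma Rel_refl s : Rel s s.
Proof. exact: Rel_prov (prov_rfl s). Qed.
Lemma kap_eq s t : kap s = kap t <-> Rel s t.
Proof.
split.
- move=> E; have : Ek k (sw t) \in kap t by rewrite inE; apply/asbP; exists t; split=> //; exact: Rel_refl.
  rewrite -E inE => /asbP [t' [/Ek_agree h r]]; apply: Rel_trans r _.
  apply: Rel_sym; exists (sw t'), (sw t'); split; first exact: prov_rfl.
  by split=> //; exact: agree_sym.
- move=> r; apply/setP => f; rewrite !inE; apply/asbP/asbP => [[t' [-> r']]|[t' [-> r']]]; exists t'; split=> //.
  + exact: Rel_trans (Rel_sym r) r'.
  + exact: Rel_trans r r'.
Qed.
Lemma kapM : forall x x' y y', kap x = kap x' -> kap y = kap y' -> kap (omul x y) = kap (omul x' y').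
Proof. move=> x x' y y' /kap_eq h1 /kap_eq h2; apply/kap_eq; exact: Rel_mul. Qed.
Definition TT := QM (@omulA A) (@omul1 A) (@omulr1 A) kapM.
Definition phi : Omega A -> TT := qh (@omulA A) (@omul1 A) (@omulr1 A) kapM.
Lemma phi_eq s t : phi s = phi t <-> Rel s t.
Proof. rewrite /phi qh_eq; exact: kap_eq. Qed.
Lemma phi_hom : cont_hom_fin phi.
Proof.
split; first by []. split; first exact: qhM.
move=> x; exists k => x' h; apply/phi_eq; exact: Rel_agree.
Qed.
Lemma TT_models : models Sigma TT.
Proof.
move=> B u v huv psi hpsi.
pose g := fun b => proj1_sig (constructive_indefinite_description _ (qh_surj (psi (gen b)))).
have hg : forall b, psi (gen b) = phi (g b).
  move=> b; rewrite /g; by case: constructive_indefinite_description.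
have key : forall x, psi x = phi (osubst g x).
  move=> x; rewrite (determ hpsi) -[phi (osubst g x)]/((phi \o osubst g) x).
  rewrite (determ (cont_hom_fin_comp (osubst_hom g) phi_hom)).
  congr (oev x TT); apply: functional_extensionality => b /=; by rewrite osubst_gen hg.
rewrite !key; apply/phi_eq; apply: Rel_prov; exact: prov_sigma huv (osubst_hom g).
Qed.
End Fixed.

Lemma main_thm (A : finType) (u v : Omega A) :
  (forall T : FinMon, models Sigma T -> holds_in T u v) -> prov u v.
Proof.
move=> Hv; apply: NNPP => nuv.
have nsw : ~ prov (swc (elim A) u) (swc (elim A) v).
  move=> h; apply: nuv; apply: prov_trans (prov_sw u) _; apply: prov_trans h (prov_sym (prov_sw v)).
have : ~ (forall m, exists p q, prov p q /\ agree m (swc (elim A) u) p /\ agree m (swc (elim A) v) q).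
  move=> h; exact: nsw (prov_closure h).
move=> /not_all_ex_not [k nk].
have := Hv (TT A k) (@TT_models A k) (@phi A k) (phi_hom A k) => /phi_eq; exact: nk.
Qed.
End Main.

Theorem corollary8p4 (Sigma : pseudoidentities) :
  (forall T : FinMon, models Sigma T -> is_group T) -> h_strong Sigma.
Proof.
move=> Hg A u v Hv.
have : ~ models Sigma U1 by move=> h; exact: U1_not_group (Hg _ h).
move=> /not_all_ex_not [B /not_all_ex_not [u0 /not_all_ex_not [v0 H]]].
move: (imply_to_and _ _ H) => [S0 nh].
have [phi0 H2] := not_all_ex_not _ _ nh.
have [hphi neq] := imply_to_and _ _ H2.
rewrite !(determ hphi) in neq.
exact: (main_thm S0 neq Hv).
Qed.
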